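(* Let $G$ be a torsion-free group, $\mathbb{F}$ a field, $\mathsf{a}$ a unit in $\mathbb{F}[G]$ with $|supp(\mathsf{a})|=4$ and $|S_{\mathsf{a}}|=10$, and $\mathsf{b}$ a mate of $\mathsf{a}$. Then one of the following holds: (i) there exist distinct non-trivial $x,y\in G$ and $\mathsf{a}',\mathsf{b}'\in\mathbb{F}[G]$ with $supp(\mathsf{a}')=\{1,x,x^{-1},y\}$, $\mathsf{a}'\mathsf{b}'=1$ and $U(\mathsf{a},\mathsf{b})\cong U(\mathsf{a}',\mathsf{b}')$; (ii) there exist distinct non-trivial $x,y\in G$ and $\mathsf{a}',\mathsf{b}'\in\mathbb{F}[G]$ with $supp(\mathsf{a}')=\{1,x,y,xy\}$, $\mathsf{a}'\mathsf{b}'=1$ and $U(\mathsf{a},\mathsf{b})\cong U(\mathsf{a}',\mathsf{b}')$.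
   Context: $supp(\gamma)=\{x\in G:\gamma_x\ne0\}$; $S_{\mathsf{a}}=\{h^{-1}h':h\ne h',\ h,h'\in supp(\mathsf{a})\}$. A mate of $\mathsf{a}$ is an element $\mathsf{b}$ with $\mathsf{a}\mathsf{b}=1$ of minimal support size among all $\mathsf{b}'$ with $\mathsf{a}\mathsf{b}'=1$. For $\mathsf{c}\mathsf{d}=1$, $U(\mathsf{c},\mathsf{d})$ is the multigraph with vertex set $supp(\mathsf{d})$ whose edges are the sets $\{(h,h',g,g'),(h',h,g',g)\}$ with $h,h'\in supp(\mathsf{c})$, $g,g'\in supp(\mathsf{d})$, $g\ne g'$, $hg=h'g'$, each joining $g$ and $g'$. Isomorphism $\cong$ means a pair of bijections on vertices and on edges preserving adjacency and non-adjacency of vertices and of edges. *)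

(* Defs.v *)
(* Group algebra F[G] of an arbitrary (possibly infinite)
   group G (mathcomp's [groupType], which is also a choiceType), represented by
   finitely supported functions G -> F ([fsfun] from finmap). *)
From HB Require Import structures.
From mathcomp Require Import all_boot all_order all_algebra.
From mathcomp Require Import finmap.
Set Implicit Arguments. Unset Strict Implicit. Unset Printing Implicit Defensive.
Import Order.TTheory GRing.Theory Num.Theory.
Local Open Scope ring_scope.
Local Open Scope fset_scope.

Section GroupAlgebra.
Variables (G : groupType) (F : fieldType).

Notation GA := {fsfun G -> F with 0}.

Definition torsion_free : Prop :=
  forall (x : G) (n : nat), (0 < n)%N -> (x ^+ n)%g = 1%g -> x = 1%g.

Definition supp (c : GA) : {fset G} := finsupp c.

Definition gconv (c d : GA) (g : G) : F :=
  \sum_(h <- supp c) c h * d (h^-1 * g)%g.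

Definition mul_is_one (c d : GA) : Prop :=
  forall g : G, gconv c d g = (g == 1%g)%:R.

Definition is_unit_GA (c : GA) : Prop :=
  exists d : GA, mul_is_one c d /\ mul_is_one d c.

Definition is_mate (c d : GA) : Prop :=
  mul_is_one c d /\ forall d' : GA, mul_is_one c d' -> (#|` supp d| <= #|` supp d'|)%N.

Definition S_set (c : GA) : {fset G} :=
  [fset (h^-1 * h')%g | h in supp c, h' in (supp c `\ h)].

Definition quad := (G * G * G * G)%type.
Definition qswap (q : quad) : quad :=
  let: (h, h', g, g') := q in (h', h, g', g).
Definition edge_of (q : quad) : {fset quad} := [fset q; qswap q].

Definition valid_quad (c d : GA) (q : quad) : Prop :=
  let: (h, h', g, g') := q in
  [/\ h \in supp c, h' \in supp c, g \in supp d, g' \in supp d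
    & g != g' /\ (h * g)%g = (h' * g')%g].

Definition is_U_edge (c d : GA) (e : {fset quad}) : Prop :=
  exists q : quad, valid_quad c d q /\ e = edge_of q.

Definition U_vertex (c d : GA) := {g : G | g \in supp d}.
Definition U_edge (c d : GA) := {e : {fset quad} | is_U_edge c d e}.

Definition joins (e : {fset quad}) (u v : G) : Prop :=
  exists h h' : G, e = edge_of (h, h', u, v).

Definition U_vadj (c d : GA) (u v : U_vertex c d) : Prop :=
  exists e : U_edge c d, joins (proj1_sig e) (proj1_sig u) (proj1_sig v).

Definition U_eadj (c d : GA) (e1 e2 : U_edge c d) : Prop :=
  exists w x y : G, joins (proj1_sig e1) w x /\ joins (proj1_sig e2) w y.

Definition U_iso (c d c' d' : GA) : Prop :=
  exists (phi : U_vertex c d -> U_vertex c' d') (psi : U_edge c d -> U_edge c' d'),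
    [/\ bijective phi, bijective psi,
        (forall u v, U_vadj u v <-> U_vadj (phi u) (phi v))
      & (forall e1 e2, U_eadj e1 e2 <-> U_eadj (psi e1) (psi e2))].

End GroupAlgebra.

(* Main.v *)
Require Import Defs.
From HB Require Import structures.
From mathcomp Require Import all_boot all_order all_algebra.
From mathcomp Require Import finmap.
From Stdlib Require Import Classical ProofIrrelevance.
Set Implicit Arguments. Unset Strict Implicit. Unset Printing Implicit Defensive.
Import Order.TTheory GRing.Theory Num.Theory.
Local Open Scope ring_scope.
Local Open Scope fset_scope.
Section T.
Variables (G : groupType) (F : fieldType) (a b : {fsfun G -> F with 0}) (t : G).
Definition at_ : {fsfun G -> F with 0} := [fsfun x in [fset (t * y)%g | y in supp a] => a (t^-1 * x)%g].
Definition bt_ : {fsfun G -> F with 0} := [fsfun x in [fset (y * t^-1)%g | y in supp b] => b (x * t)%g].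
Lemma atE x : at_ x = a (t^-1 * x)%g.
Proof.
rewrite /at_ fsfunE; case: ifP => // H.
have [Hin|] := boolP ((t^-1 * x)%g \in finsupp a); last by rewrite mem_finsupp negbK => /eqP.
move: H; suff -> : x \in [fset (t * y)%g | y in supp a] by [].
  by apply/imfsetP; exists (t^-1 * x)%g; [exact: Hin | rewrite mulVKg].
Qed.
Lemma btE x : bt_ x = b (x * t)%g.
Proof.
rewrite /bt_ fsfunE; case: ifP => // H.
have [Hin|] := boolP ((x * t)%g \in finsupp b); last by rewrite mem_finsupp negbK => /eqP.
move: H; suff -> : x \in [fset (y * t^-1)%g | y in supp b] by [].
  by apply/imfsetP; exists (x * t)%g; [exact: Hin | rewrite mulgK].
Qed.
Lemma supp_at : supp at_ = [fset (t * y)%g | y in supp a].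
Proof.
apply/fsetP => x; rewrite /supp mem_finsupp atE; apply/idP/imfsetP.
  by move=> H; exists (t^-1 * x)%g; rewrite ?mem_finsupp ?mulVKg.
by case=> y /= Hy ->; rewrite mulKg -mem_finsupp.
Qed.
Lemma supp_bt : supp bt_ = [fset (y * t^-1)%g | y in supp b].
Proof.
apply/fsetP => x; rewrite /supp mem_finsupp btE; apply/idP/imfsetP.
  by move=> H; exists (x * t)%g; rewrite ?mem_finsupp ?mulgK.
by case=> y /= Hy ->; rewrite mulgVK -mem_finsupp.
Qed.
Lemma gconv_t g : gconv at_ bt_ g = gconv a b (t^-1 * g * t)%g.
Proof.
rewrite /gconv supp_at big_imfset /=; last by move=> x y _ _; apply: mulgI.
apply: eq_bigr => h _; rewrite atE btE mulKg invgM !mulgA.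
done.
Qed.
Lemma mul_t : mul_is_one a b -> mul_is_one at_ bt_.
Proof.
move=> H g; rewrite gconv_t H; congr (_ %:R); congr nat_of_bool.
apply/eqP/eqP => [E|->]; last by rewrite mulg1 mulVg.
by move: E => /(congr1 (fun z => t * z * t^-1)%g) /=; rewrite mulg1 mulgV !mulgA mulgV mul1g mulgK.
Qed.
End T.

Definition qmap (G : groupType) (s r : G) (q : quad G) : quad G :=
  let: (h, h', g, g') := q in ((s * h)%g, (s * h')%g, (g * r)%g, (g' * r)%g).

Lemma imfset_edge (G : groupType) (s r : G) q :
  qmap s r @` edge_of q = edge_of (qmap s r q).
Proof.
case: q => [[[h h'] g] g']; apply/fsetP => x; apply/imfsetP/idP.
  by case=> y /=; rewrite !inE => /orP[] /eqP -> ->; rewrite eqxx ?orbT.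
rewrite !inE => /orP[] /eqP ->.
  by exists (h, h', g, g'); rewrite //= !inE eqxx.
by exists (h', h, g', g); rewrite //= !inE eqxx orbT.
Qed.

Lemma imfset_qmapK (G : groupType) (s r s' r' : G) (E : {fset quad G}) :
  (s' * s = 1)%g -> (r * r' = 1)%g -> qmap s' r' @` (qmap s r @` E) = E.
Proof.
move=> Hs Hr; rewrite -imfset_comp.
have -> : [fset (qmap s' r' \o qmap s r) x | x in E] = [fset id x | x in E].
  apply: eq_imfset => // -[[[h h'] g] g'] /=; by rewrite !mulgA Hs -!mulgA Hr !mul1g !mulg1.
by rewrite imfset_id.
Qed.

Lemma joins_map (G : groupType) (s r : G) E u v :
  joins E u v -> joins (qmap s r @` E) (u * r)%g (v * r)%g.
Proof. by case=> h [h' ->]; rewrite imfset_edge; exists (s * h)%g, (s * h')%g. Qed.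

Lemma sig_eqP (T : Type) (P : T -> Prop) (x y : {z | P z}) : proj1_sig x = proj1_sig y -> x = y.
Proof. case: x => x px; case: y => y py /= E; subst y; f_equal; apply: proof_irrelevance. Qed.

Section Iso.
Variables (G : groupType) (F : fieldType) (a b : {fsfun G -> F with 0}) (t : G).
Notation a' := (at_ a t). Notation b' := (bt_ b t).

Lemma valid_fw q : valid_quad a b q -> valid_quad a' b' (qmap t t^-1 q).
Proof.
case: q => [[[h h'] g] g'] [H1 H2 H3 H4 [H5 H6]] /=.
rewrite /supp !mem_finsupp !atE !btE !mulKg !mulgVK -!mem_finsupp; split => //; split.
  by apply: contra H5 => /eqP /mulIg ->.
by rewrite !mulgA -(mulgA t h) H6 !mulgA.
Qed.

Lemma valid_bw q : valid_quad a' b' q -> valid_quad a b (qmap t^-1 t q).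
Proof.
case: q => [[[h h'] g] g'] [H1 H2 H3 H4 [H5 H6]] /=.
move: H1 H2 H3 H4; rewrite /supp !mem_finsupp !atE !btE -!mem_finsupp => H1 H2 H3 H4.
split => //; split.
  by apply: contra H5 => /eqP /mulIg ->.
by rewrite !mulgA -(mulgA _ h) H6 !mulgA.
Qed.

Lemma vert_fw (v : U_vertex a b) : (proj1_sig v * t^-1)%g \in supp b'.
Proof. by case: v => v /=; rewrite /supp !mem_finsupp btE mulgVK. Qed.
Lemma vert_bw (v : U_vertex a' b') : (proj1_sig v * t)%g \in supp b.
Proof. by case: v => v /=; rewrite /supp !mem_finsupp btE. Qed.

Definition phi (v : U_vertex a b) : U_vertex a' b' := exist (fun g => g \in supp b') _ (vert_fw v).
Definition phi' (v : U_vertex a' b') : U_vertex a b := exist (fun g => g \in supp b) _ (vert_bw v).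

Lemma edge_fw (e : U_edge a b) : is_U_edge a' b' (qmap t t^-1 @` proj1_sig e).
Proof.
case: e => e [q [Hq E]] /=; rewrite E; exists (qmap t t^-1 q); split; first exact: valid_fw.
exact: imfset_edge.
Qed.
Lemma edge_bw (e : U_edge a' b') : is_U_edge a b (qmap t^-1 t @` proj1_sig e).
Proof.
case: e => e [q [Hq E]] /=; rewrite E; exists (qmap t^-1 t q); split; first exact: valid_bw.
exact: imfset_edge.
Qed.
Definition psi (e : U_edge a b) : U_edge a' b' := exist (is_U_edge a' b') _ (edge_fw e).
Definition psi' (e : U_edge a' b') : U_edge a b := exist (is_U_edge a b) _ (edge_bw e).

Lemma U_iso_t : U_iso a b a' b'.
Proof.
exists phi, psi; split.
- exists phi' => v; apply: sig_eqP => /=; [by rewrite mulgVK | by rewrite mulgK].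
- exists psi' => e; apply: sig_eqP => /=; apply: imfset_qmapK;
    by rewrite ?mulVg ?mulgV.
- move=> u v; split.
    case=> e J; exists (psi e); exact: joins_map J.
  case=> e J; exists (psi' e); move: (joins_map t^-1 t J) => /=.
  by rewrite !mulgVK.
- move=> e1 e2; split.
    case=> w [x [y [J1 J2]]]; exists (w * t^-1)%g, (x * t^-1)%g, (y * t^-1)%g.
    by split; apply: joins_map.
  case=> w [x [y [J1 J2]]]; exists (w * t)%g, (x * t)%g, (y * t)%g.
  move: (joins_map t^-1 t J1) (joins_map t^-1 t J2) => /=.
  by rewrite !imfset_qmapK ?mulVg ?mulgV.
Qed.
End Iso.
Lemma S_coinc (G : groupType) (F : fieldType) (a : {fsfun G -> F with 0}) :
  #|` supp a| = 4%N -> #|` S_set a| = 10%N ->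
  exists h1 h2 h3 h4 : G, [/\ h1 \in supp a, h2 \in supp a, h3 \in supp a, h4 \in supp a &
    [/\ h1 != h2, h3 != h4, h1 != h3 & (h1^-1 * h2 = h3^-1 * h4)%g]].
Proof.
move=> H4 H10; apply: NNPP => Hn.
have : #|` S_set a| = 12%N; last by rewrite H10.
rewrite card_fset_sum1 /S_set big_imfset2 /=.
  have -> : (\sum_(i <- supp a) \sum_(j <- supp a `\ i) 1 = \sum_(i <- supp a) 3)%N.
    rewrite big_seq [RHS]big_seq; apply: eq_bigr => i Hi.
    rewrite -card_fset_sum1; move: (cardfsD1 i (supp a)); rewrite Hi H4. by case.
  by rewrite big_const_seq count_predT H4.
move=> [i j] [k l]; rewrite !inE /= => /andP[Hi Hj] /andP[Hk Hl] E.
have ik : i = k.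
  case: (eqVneq i k) => // ik; exfalso; apply: Hn; exists i, j, k, l.
  move: Hj Hl => /andP[ji Hj] /andP[lk Hl].
  by split => //; split => //; rewrite eq_sym.
subst k; move: E => /mulgI E; by subst l.
Qed.
Lemma imfset4 (G : groupType) (f : G -> G) x1 x2 x3 x4 :
  f @` [fset x1; x2; x3; x4] = [fset f x1; f x2; f x3; f x4].
Proof.
apply/fsetP => z; apply/imfsetP/idP.
  by case=> y /=; rewrite !inE -!orbA => /or4P[] /eqP -> ->; rewrite eqxx ?orbT.
rewrite !inE -!orbA => /or4P[] /eqP ->; [exists x1|exists x2|exists x3|exists x4]; by rewrite // !inE eqxx ?orbT.
Qed.

Lemma fin4 (G : groupType) (A : {fset G}) x1 x2 x3 x4 :
  #|` A| = 4%N -> x1 \in A -> x2 \in A -> x3 \in A -> x4 \in A ->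
  x1 != x2 -> x1 != x3 -> x1 != x4 -> x2 != x3 -> x2 != x4 -> x3 != x4 ->
  A = [fset x1; x2; x3; x4].
Proof.
move=> HA H1 H2 H3 H4 d12 d13 d14 d23 d24 d34.
have Hc : #|` [fset x1; x2; x3; x4]| = 4%N.
  have -> : [fset x1; x2; x3; x4] = [fset x in [:: x1; x2; x3; x4]].
    by apply/fsetP => z; rewrite !inE orbF -!orbA.
  by rewrite card_fseq /= !inE (negbTE d12) (negbTE d13) (negbTE d14)
    (negbTE d23) (negbTE d24) (negbTE d34).
have Hs : [fset x1; x2; x3; x4] `<=` A.
  by apply/fsubsetP => z; rewrite !inE -!orbA => /or4P[] /eqP ->.
by apply/esym/fsetP; apply/(fsubset_cardP (etrans Hc (esym HA))).
Qed.

Lemma fourth (G : groupType) (A : {fset G}) x1 x2 x3 :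
  #|` A| = 4%N -> x1 \in A -> x2 \in A -> x3 \in A ->
  x1 != x2 -> x1 != x3 -> x2 != x3 ->
  exists2 x4, x4 \in A & [/\ x1 != x4, x2 != x4 & x3 != x4].
Proof.
move=> HA H1 H2 H3 d12 d13 d23.
have Hs : [fset x1; x2; x3] `<=` A by apply/fsubsetP => z; rewrite !inE -!orbA => /or3P[] /eqP ->.
have : #|` A `\` [fset x1; x2; x3]| == 1%N.
  rewrite cardfsDS //.
  have -> : [fset x1; x2; x3] = [fset x in [:: x1; x2; x3]].
    by apply/fsetP => z; rewrite !inE orbF -!orbA.
  rewrite card_fseq /= !inE (negbTE d12) (negbTE d13) (negbTE d23) /=.
  by rewrite [X in (X - _)%N]HA.
case/cardfs1P => y Hy.
have : y \in A `\` [fset x1; x2; x3] by rewrite Hy inE.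
rewrite !inE => /andP[nB yA]; move: nB; rewrite !negb_or => /andP[/andP[n1 n2] n3].
by exists y => //; split; rewrite eq_sym.
Qed.

Lemma neqS (T : eqType) (x y : T) : x != y -> y != x.
Proof. by rewrite eq_sym. Qed.

Lemma finish_i (G : groupType) (F : fieldType) (a b : {fsfun G -> F with 0}) (t p1 p2 p3 p4 x y : G) :
  mul_is_one a b -> supp a = [fset p1; p2; p3; p4] ->
  p1 != p2 -> p2 != p4 -> p1 != p4 ->
  (t * p1 = 1)%g -> (t * p2 = x)%g -> (t * p3 = x^-1)%g -> (t * p4 = y)%g ->
  exists x y : G, [/\ x != y, x != 1%g, y != 1%g &
     exists a' b' : {fsfun G -> F with 0},
       [/\ supp a' = [fset 1%g; x; x^-1%g; y], mul_is_one a' b' & U_iso a b a' b']].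
Proof.
move=> Hab HA d12 d24 d14 e1 e2 e3 e4; exists x, y; split.
- by rewrite -e2 -e4; apply: contra d24 => /eqP /mulgI ->.
- by rewrite -e2 -e1; apply: contra d12 => /eqP /mulgI ->.
- by rewrite -e4 -e1; apply: contra d14 => /eqP /mulgI ->.
exists (at_ a t), (bt_ b t); split.
- by rewrite supp_at HA imfset4 e1 e2 e3 e4.
- exact: mul_t.
- exact: U_iso_t.
Qed.

Lemma finish_ii (G : groupType) (F : fieldType) (a b : {fsfun G -> F with 0}) (t p1 p2 p3 p4 x y : G) :
  mul_is_one a b -> supp a = [fset p1; p2; p3; p4] ->
  p1 != p2 -> p2 != p3 -> p1 != p3 ->
  (t * p1 = 1)%g -> (t * p2 = x)%g -> (t * p3 = y)%g -> (t * p4 = x * y)%g ->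
  exists x y : G, [/\ x != y, x != 1%g, y != 1%g &
     exists a' b' : {fsfun G -> F with 0},
       [/\ supp a' = [fset 1%g; x; y; (x * y)%g], mul_is_one a' b' & U_iso a b a' b']].
Proof.
move=> Hab HA d12 d23 d13 e1 e2 e3 e4; exists x, y; split.
- by rewrite -e2 -e3; apply: contra d23 => /eqP /mulgI ->.
- by rewrite -e2 -e1; apply: contra d12 => /eqP /mulgI ->.
- by rewrite -e3 -e1; apply: contra d13 => /eqP /mulgI ->.
exists (at_ a t), (bt_ b t); split.
- by rewrite supp_at HA imfset4 e1 e2 e3 e4.
- exact: mul_t.
- exact: U_iso_t.
Qed.

Theorem mainTheorem14 (G : groupType) (F : fieldType)
    (a b : {fsfun G -> F with 0}) :
  torsion_free G ->
  is_unit_GA a ->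
  #|` supp a| = 4%N ->
  #|` S_set a| = 10%N ->
  is_mate a b ->
  (exists x y : G, [/\ x != y, x != 1%g, y != 1%g &
     exists a' b' : {fsfun G -> F with 0},
       [/\ supp a' = [fset 1%g; x; x^-1%g; y], mul_is_one a' b' & U_iso a b a' b']])
  \/
  (exists x y : G, [/\ x != y, x != 1%g, y != 1%g &
     exists a' b' : {fsfun G -> F with 0},
       [/\ supp a' = [fset 1%g; x; y; (x * y)%g], mul_is_one a' b' & U_iso a b a' b']]).
Proof.
move=> Htf _ H4 H10 [Hab _].
have [h1 [h2 [h3 [h4 [i1 i2 i3 i4 [d12 d34 d13 E]]]]]] := S_coinc H4 H10.
case: (eqVneq h2 h3) => [e23|n23].
  subst h3.
  have n14 : h1 != h4.
    apply/eqP => e14; subst h4; move/eqP: d12; apply.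
    have : ((h1^-1 * h2) ^+ 2 = 1)%g.
      by rewrite expg2 {2}E !mulgA mulgK mulVg.
    by move/(Htf _ 2 isT) => H; rewrite -[RHS](mulVKg h1) H mulg1.
  have [h5 i5 [d15 d25 d45]] := @fourth _ _ h1 h2 h4 H4 i1 i2 i4 d12 n14 d34.
  have HA := @fin4 _ _ h2 h4 h1 h5 H4 i2 i4 i1 i5 d34 (neqS d12) d25 (neqS n14) d45 d15.
  left; apply: (@finish_i _ _ a b h2^-1 h2 h4 h1 h5 (h1^-1 * h2)%g (h2^-1 * h5)%g Hab HA) => //; try solve [by rewrite mulVg | by rewrite E | by rewrite -E | by rewrite invgM invgK | by rewrite E invgM invgK | by rewrite E !mulgA mulgK | by rewrite eq_sym].
case: (eqVneq h1 h4) => [e14|n14].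
  subst h4.
  have [h5 i5 [d15 d25 d35]] := @fourth _ _ h1 h2 h3 H4 i1 i2 i3 d12 d13 n23.
  have HA := @fin4 _ _ h1 h2 h3 h5 H4 i1 i2 i3 i5 d12 d13 d15 n23 d25 d35.
  left; apply: (@finish_i _ _ a b h1^-1 h1 h2 h3 h5 (h1^-1 * h2)%g (h1^-1 * h5)%g Hab HA) => //; try solve [by rewrite mulVg | by rewrite E | by rewrite -E | by rewrite invgM invgK | by rewrite E invgM invgK | by rewrite E !mulgA mulgK | by rewrite eq_sym].
have n24 : h2 != h4.
  apply: contra d13 => /eqP e24; subst h4.
  by move: E => /mulIg /invg_inj ->.
have HA := @fin4 _ _ h1 h3 h2 h4 H4 i1 i3 i2 i4 d13 d12 n14 (neqS n23) d34 n24.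
right; apply: (@finish_ii _ _ a b h1^-1 h1 h3 h2 h4 (h1^-1 * h3)%g (h1^-1 * h2)%g Hab HA) => //; try solve [by rewrite mulVg | by rewrite E | by rewrite -E | by rewrite invgM invgK | by rewrite E invgM invgK | by rewrite E !mulgA mulgK | by rewrite eq_sym].
Qed.
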